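(* Let $q\ge 2$ and let $(\epsilon_n)_{n\ge1}$ be positive reals with $\epsilon_n\to 0$. Then there exist, for all sufficiently large $n$, ID codes for $\Pi^q_n$ with $M_n\ge 2^{\epsilon_n n^{q-1}}$ messages, type-I error probability $\lambda_{1,n}=0$ and type-II error probability $\lambda_{2,n}$, such that $\lambda_{2,n}\to 0$ as $n\to\infty$.
   Context: Fix an integer $q\ge 2$ and let $\mathcal A_q=\{1,\dots,q\}$. For $n\ge 1$, $S_n$ is the symmetric group on $\{1,\dots,n\}$, and for $\mathbf x\in\mathcal A_q^n$, $\sigma\in S_n$, we write $\sigma\mathbf x=(x_{\sigma^{-1}(1)},\dots,x_{\sigma^{-1}(n)})$. The $n$-block $q$-ary uniform permutation channel $\Pi^q_n$ has input and output alphabet $\mathcal A_q^n$ and transition probabilities $\Pi^q_n(\mathbf y\mid\mathbf x)=\frac{1}{n!}\sum_{\sigma\in S_n}\mathbf 1\{\mathbf y=\sigma\mathbf x\}$; $\Pi^q$ denotes the family $(\Pi^q_n)_{n\ge1}$. An ID code (with deterministic decoders) with $M$ messages for $\Pi^q_n$ (an ''$(n,M,\lambda_1,\lambda_2)$ ID code'') is a family $\{(Q_i,\mathcal D_i)\}_{i=1}^M$ where each $Q_i$ is a probability distribution on $\mathcal A_q^n$ (the stochastic encoder of message $i$) and $\mathcal D_i\subseteq\mathcal A_q^n$ (the acceptance region of message $i$). Its error probabilities are $\lambda_{i\to j}=\sum_{\mathbf x}Q_i(\mathbf x)\sum_{\mathbf y\in\mathcal D_j}\Pi^q_n(\mathbf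 y\mid\mathbf x)$ for $i\ne j$ and $\lambda_{i\not\to i}=\sum_{\mathbf x}Q_i(\mathbf x)\sum_{\mathbf y\notin\mathcal D_i}\Pi^q_n(\mathbf y\mid\mathbf x)$; the type-I error probability is $\lambda_1=\max_i\lambda_{i\not\to i}$ and the type-II error probability is $\lambda_2=\max_{i\ne j}\lambda_{i\to j}$. *)

(* Defs.v *)
From HB Require Import structures.
From mathcomp Require Import all_boot all_order all_algebra all_fingroup.
From mathcomp Require Import all_classical all_reals.
From mathcomp Require Import topology normedtype sequences exp.
Set Implicit Arguments. Unset Strict Implicit. Unset Printing Implicit Defensive.
Import Order.TTheory GRing.Theory Num.Theory.
Local Open Scope ring_scope.

(* Alphabet A_q is represented by 'I_q (i.e. {0,...,q-1}); words of length n. *)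
Definition word (q n : nat) := {ffun 'I_n -> 'I_q}.

Definition permw (q n : nat) (s : 'S_n) (x : word q n) : word q n :=
  [ffun i => x (s^-1 i)%g].

Definition Pi {R : realType} (q n : nat) (y x : word q n) : R :=
  (#|[set s : 'S_n | y == permw s x]|)%:R / (n`!)%:R.

Definition is_distr {R : realType} (q n : nat) (Q : {ffun word q n -> R}) : Prop :=
  (forall x, 0 <= Q x) /\ \sum_x Q x = 1.

Definition err_to {R : realType} (q n : nat) (Q : {ffun word q n -> R})
  (D : {set word q n}) : R :=
  \sum_x Q x * \sum_(y in D) Pi y x.

Definition err_miss {R : realType} (q n : nat) (Q : {ffun word q n -> R})
  (D : {set word q n}) : R :=
  \sum_x Q x * \sum_(y in ~: D) Pi y x.

Definition lambda1 {R : realType} (q n M : nat)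
  (Q : 'I_M -> {ffun word q n -> R}) (D : 'I_M -> {set word q n}) : R :=
  \big[Num.max/0]_(i < M) err_miss (Q i) (D i).

Definition lambda2 {R : realType} (q n M : nat)
  (Q : 'I_M -> {ffun word q n -> R}) (D : 'I_M -> {set word q n}) : R :=
  \big[Num.max/0]_(i < M) \big[Num.max/0]_(j < M | j != i) err_to (Q i) (D j).

(* Main.v *)
Require Import Defs.
From HB Require Import structures.
From mathcomp Require Import all_boot all_order all_algebra all_fingroup.
From mathcomp Require Import all_classical all_reals.
From mathcomp Require Import topology normedtype sequences exp.
From mathcomp Require Import zify lra.
Import Order.TTheory GRing.Theory Num.Theory.
Import numFieldNormedType.Exports.
Set Implicit Arguments. Unset Strict Implicit. Unset Printing Implicit Defensive.


Definition cnt q n (x : word q n) (a : 'I_q) : nat := #|[set i | x i == a]|.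

Lemma cnt_permw q n (s : 'S_n) (x : word q n) a : cnt (permw s x) a = cnt x a.
Proof.
rewrite /cnt -[RHS](card_preimset _ (@perm_inj _ (s^-1)%g)).
by apply: eq_card => i; rewrite !inE ffunE.
Qed.

Lemma card_interval n lo hi : (lo <= hi <= n)%N ->
  #|[set i : 'I_n | (lo <= i < hi)%N]| = (hi - lo)%N.
Proof.
move=> /andP[h1 h2].
rewrite -sum1_card big_mkcond /=.
under eq_bigr do rewrite inE.
rewrite -(big_mkord xpredT (fun i => if (lo <= i < hi)%N then 1%N else 0%N)).
rewrite (big_cat_nat (leq0n lo) (leq_trans h1 h2)) /= big1_seq ?add0n; last first.
  by move=> i /andP[_]; rewrite mem_index_iota => /andP[_ lt]; rewrite leqNgt lt.
rewrite (big_cat_nat h1 h2) //= [X in (_ + X)%N]big1_seq ?addn0; last first.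
  by move=> i /andP[_]; rewrite mem_index_iota => /andP[le _]; rewrite ltnNge le andbF.
rewrite big_nat_cond (eq_bigr (fun=> 1%N)); last by move=> i /andP[->].
by rewrite -big_nat_cond sum_nat_const_nat muln1.
Qed.

Definition wordof q' n L (g : {ffun 'I_q'.+1 -> 'I_L}) : word q'.+2 n :=
  [ffun i : 'I_n => oapp (lift ord0) ord0
     [pick j : 'I_q'.+1 | (j * L <= i < j * L + g j)%N]].

Lemma interval_uniq q' L (g : {ffun 'I_q'.+1 -> 'I_L}) (i : nat) (j j' : 'I_q'.+1) :
  (j * L <= i < j * L + g j)%N -> (j' * L <= i < j' * L + g j')%N -> j = j'.
Proof.
move=> H1 H2; apply/val_inj/eqP; rewrite eqn_leq; have g1 := ltn_ord (g j); have g2 := ltn_ord (g j').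
apply/andP; split; rewrite leqNgt; apply/negP => lt.
  have : (j'.+1 * L <= j * L)%N by rewrite leq_mul2r lt orbT.
  lia.
have : (j.+1 * L <= j' * L)%N by rewrite leq_mul2r lt orbT.
lia.
Qed.

Lemma cnt_wordof q' n L (g : {ffun 'I_q'.+1 -> 'I_L}) j :
  (q'.+1 * L <= n)%N -> cnt (wordof n g) (lift ord0 j) = g j.
Proof.
move=> hn; rewrite /cnt.
have -> : [set i | wordof n g i == lift ord0 j] =
          [set i : 'I_n | (j * L <= i < j * L + g j)%N].
  apply/setP => i; rewrite !inE ffunE.
  case: pickP => [j' Pj'|none] /=.
    rewrite (inj_eq (@lift_inj _ ord0)); apply/eqP/idP => [<-//|Pj].
    exact: (interval_uniq Pj' Pj).
  by rewrite (negbTE (neq_lift ord0 j)) none.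
rewrite card_interval ?addKn //.
rewrite leq_addr /=; have g1 := ltn_ord (g j); have jq := ltn_ord j.
have : (j.+1 * L <= q'.+1 * L)%N by rewrite leq_mul2r jq orbT.
rewrite mulSn.
move=> h; apply: leq_trans (leq_trans _ h) hn; rewrite [_ + g j]addnC leq_add2r ltnW //.
Qed.

Definition emb (T U : finType) (H : (#|T| <= #|U|)%N) (x : T) : U :=
  enum_val (widen_ord H (enum_rank x)).

Lemma emb_inj (T U : finType) (H : (#|T| <= #|U|)%N) : injective (emb H).
Proof.
move=> x y /enum_val_inj /(congr1 val) /= /val_inj; exact: enum_rank_inj.
Qed.


Lemma card_count (T : finType) (A : {set T}) : #|A| = count (mem A) (enum T).
Proof. rewrite cardE /enum_mem size_filter /enum_mem count_filter; apply: eq_count => x /=. by rewrite andbT. Qed.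

Lemma fixset_card m b (c : {ffun 'I_m -> 'I_b}) (A : {set 'I_m}) :
  #|[set w : {ffun 'I_m -> 'I_b} | [forall k in A, w k == c k]]| = (b ^ #|~: A|)%N.
Proof.
pose F := fun k : 'I_m => (if k \in A then pred1 (c k) else predT) : pred 'I_b.
rewrite (@eq_card _ _ (family F)); last first.
  move=> w; rewrite inE; apply/forall_inP/familyP => [H k|H k kA].
    by rewrite /F; case: ifP => [kA|//]; rewrite inE /= H.
  by have := H k; rewrite /F kA inE.
rewrite card_family /image_mem card_count.
elim: (enum 'I_m) => //= k s ->; rewrite /F inE.
by case: (k \in A) => /=; rewrite ?card1 ?mul1n // cardT size_enum_ord expnS.
Qed.

Lemma card_bigcup_leq (T I : finType) (P : pred I) (F : I -> {set T}) :
  (#|\bigcup_(i | P i) F i| <= \sum_(i | P i) #|F i|)%N.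
Proof.
elim/big_rec2: _ => [|i n U _ leUn]; first by rewrite cards0.
by rewrite (leq_trans (leq_card_setU (F i) U).1) ?leq_add2l.
Qed.

Definition agree m b (c c' : {ffun 'I_m -> 'I_b}) := #|[set k | c k == c' k]|.

Lemma agree_sym m b (c c' : {ffun 'I_m -> 'I_b}) : agree c c' = agree c' c.
Proof. by apply: eq_card => k; rewrite !inE eq_sym. Qed.

Lemma agree_refl m b (c : {ffun 'I_m -> 'I_b}) : agree c c = m.
Proof.
rewrite /agree -[RHS]card_ord; apply: eq_card => k; rewrite !inE eqxx //.
Qed.

Definition goodC m b r : pred {set {ffun 'I_m -> 'I_b}} :=
  fun C => [forall c in C, forall c' in C, (c != c') ==> (agree c c' < r)%N].

Definition ball m b r (c : {ffun 'I_m -> 'I_b}) :=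
  [set w : {ffun 'I_m -> 'I_b} | (r <= agree w c)%N].

Lemma ball_card m b r (c : {ffun 'I_m -> 'I_b}) : (0 < b)%N ->
  (#|ball r c| <= 2 ^ m * b ^ (m - r))%N.
Proof.
move=> b0.
have sub : ball r c \subset \bigcup_(A : {set 'I_m} | (r <= #|A|)%N)
     [set w : {ffun 'I_m -> 'I_b} | [forall k in A, w k == c k]].
  apply/fintype.subsetP => w; rewrite inE => hw; apply/bigcupP.
  exists [set k | w k == c k] => //; rewrite inE; apply/forall_inP => k.
  by rewrite inE.
apply: (leq_trans (subset_leq_card sub)); apply: (leq_trans (card_bigcup_leq _ _)).
apply: (@leq_trans (\sum_(A : {set 'I_m} | (r <= #|A|)%N) b ^ (m - r))%N).
  apply: leq_sum => A hA; rewrite fixset_card leq_pexp2l //.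
  have := cardsC A; rewrite card_ord; lia.
rewrite sum_nat_const leq_mul2r; apply/orP; right.
apply: leq_trans (max_card _) _.
by rewrite -cardsT -powersetT card_powerset cardsT card_ord.
Qed.

Lemma GV m b r : (0 < b)%N -> (r <= m)%N ->
  {C : {set {ffun 'I_m -> 'I_b}} | goodC r C & (b ^ m <= #|C| * (2 ^ m * b ^ (m - r)))%N}.
Proof.
move=> b0 rm.
have g0 : goodC r (finset.set0 : {set {ffun 'I_m -> 'I_b}}) by apply/forall_inP => c; rewrite inE.
case: (maxset_exists g0) => C maxC _.
have gC := maxsetp maxC.
exists C => //.
have cover : [set: {ffun 'I_m -> 'I_b}] \subset \bigcup_(c in C) ball r c.
  apply/fintype.subsetP => w _; apply/bigcupP.
  case: (boolP (w \in C)) => wC.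
    by exists w => //; rewrite inE agree_refl.
  case: (pickP [pred c | (c \in C) && (r <= agree w c)%N]) => [c /andP[cC hc]|no].
    by exists c => //; rewrite inE.
  have gw : goodC r (w |: C).
    apply/forall_inP => c1; rewrite in_setU1 => h1; apply/forall_inP => c2.
    rewrite in_setU1 => h2; apply/implyP => neq.
    case/orP: h1 => [/eqP e1|c1C]; case/orP: h2 => [/eqP e2|c2C].
    - by move: neq; rewrite e1 e2 eqxx.
    - by have := no c2; rewrite /= c2C e1 /= ltnNge => ->.
    - by have := no c1; rewrite /= c1C e2 /= agree_sym ltnNge => ->.
    - by move/forall_inP: gC => /(_ c1 c1C) /forall_inP /(_ c2 c2C) /implyP; apply.
  have e := maxsetsup maxC gw (finset.subsetUr [set w] C).
  by move: wC; rewrite -e setU11.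
have := subset_leq_card cover; rewrite cardsT card_ffun !card_ord => h.
apply: (leq_trans h); apply: (leq_trans (card_bigcup_leq _ _)).
apply: (@leq_trans (\sum_(c in C) (2 ^ m * b ^ (m - r)))%N).
  by apply: leq_sum => c _; apply: ball_card.
by rewrite sum_nat_const.
Qed.

Local Open Scope ring_scope.


Lemma sum_eq1 (T : finType) (D : {set T}) z :
  (\sum_(y in D) ((y == z) : nat) = (z \in D))%N.
Proof.
case: (boolP (z \in D)) => zD.
  rewrite (bigD1 z) //= eqxx big1 // => y /andP[_ /negbTE ->] //.
by rewrite big1 // => y yD; apply/eqP; rewrite eqb0; apply: contraNneq zD => <-.
Qed.

Definition pinvar q n (D : {set word q n}) := forall s y, (permw s y \in D) = (y \in D).

Lemma sum_Pi_inv (R : realType) q n (D : {set word q n}) x :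
  pinvar D -> \sum_(y in D) Pi (R:=R) y x = (x \in D)%:R.
Proof.
move=> iD; rewrite /Pi -mulr_suml -natr_sum.
have -> : (\sum_(y in D) #|[set s : 'S_n | y == permw s x]| = n`! * (x \in D))%N.
  transitivity (\sum_(y in D) \sum_(s : 'S_n) ((y == permw s x) : nat))%N.
    apply: eq_bigr => y _; rewrite -sum1_card big_mkcond /=.
    by apply: eq_bigr => s _; rewrite inE; case: (_ == _).
  rewrite exchange_big /=.
  transitivity (\sum_(s : 'S_n) ((x \in D) : nat))%N.
    by apply: eq_bigr => s _; rewrite sum_eq1 iD.
  by rewrite sum_nat_const card_Sn.
rewrite natrM mulrAC divff ?mul1r // pnatr_eq0 -lt0n fact_gt0 //.
Qed.

Lemma inv_setC q n (D : {set word q n}) : pinvar D -> pinvar (~: D).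
Proof. by move=> iD s y; rewrite !inE iD. Qed.

Lemma err_to_inv (R : realType) q n (Q : {ffun word q n -> R}) D :
  pinvar D -> err_to Q D = \sum_x Q x * (x \in D)%:R.
Proof. by move=> iD; apply: eq_bigr => x _; rewrite sum_Pi_inv. Qed.

Lemma err_miss_inv (R : realType) q n (Q : {ffun word q n -> R}) D :
  pinvar D -> err_miss Q D = \sum_x Q x * (x \in ~: D)%:R.
Proof. by move=> iD; apply: eq_bigr => x _; rewrite sum_Pi_inv //; apply: inv_setC. Qed.

Definition Qu {R : realType} q n m (rep : 'I_m -> word q n) : {ffun word q n -> R} :=
  [ffun x => m%:R^-1 * \sum_(k < m) (rep k == x)%:R].

Lemma Qu_sum (R : realType) q n m (rep : 'I_m -> word q n) (f : word q n -> R) :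
  \sum_x Qu rep x * f x = m%:R^-1 * \sum_(k < m) f (rep k).
Proof.
under eq_bigr do rewrite ffunE -mulrA mulr_suml.
rewrite -mulr_sumr exchange_big /=; congr (_ * _); apply: eq_bigr => k _.
rewrite (bigD1 (rep k)) //= eqxx mul1r big1 ?addr0 // => x /negbTE.
by rewrite eq_sym => ->; rewrite mul0r.
Qed.

Lemma Qu_distr (R : realType) q n m (rep : 'I_m -> word q n) :
  (0 < m)%N -> is_distr (Qu (R:=R) rep).
Proof.
move=> m0; split.
  by move=> x; rewrite ffunE mulr_ge0 ?invr_ge0 ?ler0n ?sumr_ge0.
have := Qu_sum (R:=R) rep (fun=> 1); under eq_bigr do rewrite mulr1.
move=> ->; rewrite sumr_const card_ord mulVf // pnatr_eq0 -lt0n //.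
Qed.


Definition cntv q n (x : word q n) : {ffun 'I_q -> nat} := [ffun a => cnt x a].

Lemma cntv_permw q n (s : 'S_n) (x : word q n) : cntv (permw s x) = cntv x.
Proof. by apply/ffunP => a; rewrite !ffunE cnt_permw. Qed.

Lemma construct (R : realType) q' n L t r :
  (0 < t)%N -> (0 < r)%N -> (q'.+1 * L <= n)%N ->
  (t * r * 2 ^ (2 * t) <= L ^ q'.+1)%N ->
  exists (M : nat) (Q : 'I_M -> {ffun word q'.+2 n -> R})
         (D : 'I_M -> {set word q'.+2 n}),
    [/\ forall i, is_distr (Q i), (2 ^ (t * r) <= M)%N,
        lambda1 Q D = 0 & lambda2 Q D <= t%:R^-1].
Proof.
move=> t0 r0 hn hc.
set m := (t * r)%N; set b := (2 ^ (2 * t))%N.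
have b0 : (0 < b)%N by rewrite expn_gt0.
have rm : (r <= m)%N by rewrite /m leq_pmull.
have m0 : (0 < m)%N by rewrite /m muln_gt0 t0.
case: (GV b0 rm) => C gC hC.
have H : (#|{: 'I_m * 'I_b}| <= #|{: {ffun 'I_q'.+1 -> 'I_L}}|)%N.
  by rewrite card_prod card_ffun !card_ord.
pose e := emb H.
pose rep (c : {ffun 'I_m -> 'I_b}) (k : 'I_m) : word q'.+2 n := wordof n (e (k, c k)).
pose cw (i : 'I_#|C|) : {ffun 'I_m -> 'I_b} := enum_val i.
pose D (c : {ffun 'I_m -> 'I_b}) : {set word q'.+2 n} :=
  [set y | [exists k : 'I_m, cntv y == cntv (rep c k)]].
have iD c : pinvar (D c) by move=> s y; rewrite !inE cntv_permw.
have repD c k : rep c k \in D c by rewrite inE; apply/existsP; exists k.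
have repD' c c' k : rep c k \in D c' -> c k = c' k.
  rewrite inE => /existsP[k' /eqP hk].
  have : e (k, c k) = e (k', c' k').
    apply/ffunP => j.
    have := congr1 (fun f : {ffun 'I_q'.+2 -> nat} => f (lift ord0 j)) hk; rewrite /= !ffunE.
    by rewrite /rep !cnt_wordof // => /val_inj.
  by move/emb_inj => [-> ->].
exists #|C|, (fun i => Qu (rep (cw i))), (fun i => D (cw i)); split.
- by move=> i; apply: Qu_distr.
- have e1 : (b ^ m = 2 ^ m * (2 ^ m * b ^ (m - r)))%N.
    rewrite -{1}(subnK rm) expnD mulnC /b -expnM -mulnA -/m mulSn mul1n expnD mulnA //.
  by move: hC; rewrite e1 leq_pmul2r // muln_gt0 !expn_gt0.
- rewrite /lambda1; apply: (big_ind (fun v => v = 0)) => //; first by move=> x y -> ->; rewrite maxxx.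
  move=> i _; rewrite err_miss_inv // Qu_sum big1 ?mulr0 // => k _.
  by rewrite inE repD.
- have t0R : 0 <= t%:R^-1 :> R by rewrite invr_ge0 ler0n.
  rewrite /lambda2; apply: (big_ind (fun v => v <= t%:R^-1)) => //.
    by move=> x y hx hy; rewrite ge_max hx hy.
  move=> i _; apply: (big_ind (fun v => v <= t%:R^-1)) => //.
    by move=> x y hx hy; rewrite ge_max hx hy.
  move=> j ji; rewrite err_to_inv // Qu_sum.
  have ag : (agree (cw i) (cw j) < r)%N.
    move/forall_inP: gC => /(_ (cw i) (enum_valP i)) /forall_inP /(_ (cw j) (enum_valP j)).
    move/implyP; apply; apply: contra ji => /eqP /enum_val_inj ->; exact: eqxx.
  have hs : \sum_(k < m) (rep (cw i) k \in D (cw j))%:R <= (agree (cw i) (cw j))%:R :> R.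
    rewrite /agree -sum1_card natr_sum [X in _ <= X]big_mkcond /=; apply: ler_sum => k _.
    move: (repD' (cw i) (cw j) k); case: (rep (cw i) k \in D (cw j)) => h.
      by rewrite inE (h isT) eqxx.
    by case: ifP.
  have hs' : \sum_(k < m) (rep (cw i) k \in D (cw j))%:R <= r%:R :> R.
    by apply: le_trans hs _; rewrite ler_nat ltnW.
  apply: le_trans (ler_wpM2l _ hs') _; first by rewrite invr_ge0 ler0n.
  rewrite /m natrM invfM -mulrA mulVf ?mulr1 // pnatr_eq0 -lt0n //.
Qed.

Local Open Scope classical_set_scope.
Lemma ev (P : nat -> Prop) N : (forall n, (N <= n)%N -> P n) -> \forall n \near \oo, P n.
Proof. by move=> h; exists N. Qed.
Lemma ev2 (P : nat -> Prop) : (\forall n \near \oo, P n) -> exists N, forall n, (N <= n)%N -> P n.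
Proof. by case=> N _ h; exists N. Qed.

Definition xx (R : realType) (d : nat) (eps : nat -> R) n : R := eps n * n%:R ^+ d.
Definition rr (R : realType) d (eps : nat -> R) n : nat := (Num.truncn (xx d eps n)).+1.
Definition cond (R : realType) d (eps : nat -> R) n t : bool :=
  (t * rr d eps n * 2 ^ (2 * t) <= (n %/ d) ^ d)%N.

Lemma xx_ge0 (R : realType) d (eps : nat -> R) n : (0 < d)%N ->
  (forall n, (0 < n)%N -> 0 < eps n) -> 0 <= xx d eps n.
Proof.
move=> d0 he; rewrite /xx; case: n => [|n].
  by rewrite expr0n eqn0Ngt d0 mulr0.
by rewrite mulr_ge0 ?exprn_ge0 ?ler0n // ltW // he.
Qed.

Lemma rr_le (R : realType) d (eps : nat -> R) n : (0 < d)%N ->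
  (forall n, (0 < n)%N -> 0 < eps n) -> (rr d eps n)%:R <= xx d eps n + 1.
Proof.
move=> d0 he; rewrite /rr -addn1 natrD lerD2r truncn_le; exact: xx_ge0.
Qed.

Lemma rr_gt (R : realType) d (eps : nat -> R) n : xx d eps n < (rr d eps n)%:R.
Proof. by rewrite /rr truncnS_gt. Qed.

Lemma key (R : realType) d (eps : nat -> R) K : (0 < d)%N ->
  (forall n, (0 < n)%N -> 0 < eps n) -> eps @ \oo --> 0 ->
  exists N, forall n, (N <= n)%N -> cond d eps n K.
Proof.
move=> d0 he ce.
set c := (K * 2 ^ (2 * K))%N; set W := ((2 * d) ^ d)%N.
have W0 : (0 < W)%N by rewrite expn_gt0 muln_gt0 d0.
have e0 : 0 < ((2 * W * c).+1%:R : R)^-1 by rewrite invr_gt0 ltr0n.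
have [N1 hN1] := ev2 (cvgr0_norm_lt _ ce _ e0).
exists (maxn N1 (maxn d (2 * W * c))) => n; rewrite !geq_max => /and3P[n1 nd nc].
have hn := hN1 n n1; rewrite /= in hn.
set L := (n %/ d)%N.
have nL : (n <= 2 * d * L)%N.
  have L0 : (0 < L)%N by rewrite divn_gt0.
  have : (d <= L * d)%N by rewrite leq_pmull.
  have := ltn_ceil n d0; rewrite -/L mulSn; lia.
have nW : (n ^ d <= W * L ^ d)%N by rewrite /W -expnMn leq_exp2r.
have ncW : (2 * W * c <= n ^ d)%N.
  apply: leq_trans nc _; rewrite -{1}(expn1 n) leq_pexp2l //; exact: leq_trans d0 nd.
rewrite /cond -mulnAC -/c.
have : (rr d eps n)%:R <= eps n * n%:R ^+ d + 1 := rr_le n d0 he.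
move: hn ncW nW => ha h1 h2 h3.
rewrite -/L; clearbody c W L.
have a0 : 0 <= eps n by apply/ltW/he/(leq_trans d0 nd).
rewrite -(ler_nat R) natrM.
move: h1 h2; rewrite -!(ler_nat R) !natrM !natrX -!/(xx _ _ _) => h1 h2.
move: ha; rewrite ger0_norm // -div1r ltr_pdivlMr ?ltr0n // -addn1 natrD natrM natrM => ha.
set w := (W%:R : R) in h1 h2 ha *; set cc := (c%:R : R) in h1 ha *.
set X := (n%:R ^+ d : R) in h1 h2 h3 *; set a := eps n in a0 ha h3 *.
set l := ((L%:R ^+ d) : R) in h2 *; set q := ((rr d eps n)%:R : R) in h3 *.
have w0 : 0 < w by rewrite ltr0n.
have c0 : 0 <= cc by rewrite ler0n.
have q0 : 0 <= q by rewrite ler0n.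
have X0 : 0 <= X by rewrite exprn_ge0 ?ler0n.
have s1 : 2 * w * cc * a <= 1 by nra.
have s2 : 0 <= (cc * w) * (a * X + 1 - q).
  by apply: mulr_ge0; [apply: mulr_ge0 => //; exact: ltW | rewrite subr_ge0].
have s3 : (2 * w * cc * a) * X <= X by rewrite -{2}(mul1r X) ler_wpM2r.
have : cc * q * w <= X by nra.
move=> hh; rewrite -(ler_pM2r w0); nra.
Qed.

Local Open Scope classical_set_scope.
Local Open Scope ring_scope.

Theorem theorem1 (R : realType) (q : nat) (eps : nat -> R) :
  (2 <= q)%N ->
  (forall n : nat, (0 < n)%N -> 0 < eps n) ->
  eps @ \oo --> 0 ->
  exists (N : nat) (M : nat -> nat)
         (Q : forall n : nat, 'I_(M n) -> {ffun word q n -> R})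
         (D : forall n : nat, 'I_(M n) -> {set word q n}),
    (forall n : nat, (N <= n)%N ->
       [/\ forall i, is_distr (Q n i),
           2 `^ (eps n * (n%:R) ^+ q.-1) <= (M n)%:R
         & lambda1 (Q n) (D n) = 0]) /\
    (fun n => lambda2 (Q n) (D n)) @ \oo --> 0.
Proof.
move=> q2 he ce.
case: q q2 => [|[|q']] // _ /=.
have d0 : (0 < q'.+1)%N by [].
pose t n := val [arg max_(i > (ord0 : 'I_n.+1) | cond q'.+1 eps n i) (i : nat)].
have tP n : cond q'.+1 eps n (t n) /\
    forall K, (K <= n)%N -> cond q'.+1 eps n K -> (K <= t n)%N.
  rewrite /t; case: arg_maxnP => [|i ci mx]; first by rewrite /cond !mul0n.
  split => // K Kn cK; exact: (mx (Ordinal (Kn : (K < n.+1)%N)) cK).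
have Hn n : exists M (Q : 'I_M -> {ffun word q'.+2 n -> R})
    (D : 'I_M -> {set word q'.+2 n}),
    (0 < t n)%N -> [/\ forall i, is_distr (Q i),
       2 `^ (eps n * n%:R ^+ q'.+1) <= M%:R, lambda1 Q D = 0
       & lambda2 Q D <= (t n)%:R^-1].
  case: (posnP (t n)) => [->|t0].
    by exists 0%N, (fun _ => [ffun => 0]), (fun _ => finset.set0).
  have [c1 _] := tP n.
  have hn : (q'.+1 * (n %/ q'.+1) <= n)%N by rewrite mulnC leq_divM.
  have [M [Q [D [h1 h2 h3 h4]]]] := construct R t0 (ltn0Sn _) hn c1.
  exists M, Q, D => _; split => //.
  apply: (@le_trans _ _ (2 `^ (rr q'.+1 eps n)%:R)).
    by rewrite ler_powR ?ler1n // ltW // rr_gt.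
  rewrite powR_mulrn // -natrX ler_nat; apply: leq_trans h2.
  by rewrite leq_pexp2l // leq_pmull.
have [N1 hN1] := key 1 d0 he ce.
exists (maxn N1 1), (fun n => sval (cid (Hn n))),
  (fun n => sval (cid (svalP (cid (Hn n))))),
  (fun n => sval (cid (svalP (cid (svalP (cid (Hn n))))))).
have P n := svalP (cid (svalP (cid (svalP (cid (Hn n)))))).
have tpos n : (maxn N1 1 <= n)%N -> (0 < t n)%N.
  rewrite geq_max => /andP[n1 n0]; exact: (tP n).2 _ n0 (hN1 n n1).
split.
  by move=> n hn; have [h1 h2 h3 _] := P n (tpos n hn); split.
apply/cvgr0Pnorm_le => e e0.
set K := (Num.truncn e^-1).+1.
have [NK hK] := key K d0 he ce.
exists (maxn (maxn NK K) (maxn N1 1)) => // n /=; rewrite !geq_max => /and3P[/andP[nk kn] n1 n0].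
have tp : (0 < t n)%N by apply: tpos; rewrite geq_max n1.
have tK : (K <= t n)%N by exact: (tP n).2 _ kn (hK n nk).
have [_ _ _ hl] := P n tp.
have l0 : 0 <= lambda2 (sval (cid (svalP (cid (Hn n)))))
                       (sval (cid (svalP (cid (svalP (cid (Hn n))))))).
  by apply/bigmax_geP; left.
rewrite ger0_norm //; apply: le_trans hl _.
apply: (@le_trans _ _ K%:R^-1).
  by rewrite lef_pV2 ?posrE ?ltr0n // ler_nat.
rewrite -[e]invrK lef_pV2 ?posrE ?ltr0n ?invr_gt0 //.
exact/ltW/truncnS_gt.
Qed.
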